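(* Let $1\le r\le n$ be integers and suppose there is a prime $p$ with $\frac{n}{r+1}<p\le\frac{n}{r}$ and $r<p$. Then for every $r$-tuple of positive integers $\mathbf{s}=(s_1,\ldots,s_r)$, $H_n(s_1,\ldots,s_r)$ is not an integer.
   Context: $H_n(s_1,\ldots,s_r)=\sum_{1\le k_1<k_2<\cdots<k_r\le n}\frac{1}{k_1^{s_1}\cdots k_r^{s_r}}$. *)

(* Defs.v *)
From HB Require Import structures.
From mathcomp Require Import all_boot all_order all_algebra.
Set Implicit Arguments. Unset Strict Implicit. Unset Printing Implicit Defensive.
Import Order.TTheory GRing.Theory Num.Theory.
Local Open Scope ring_scope.

(* Multiple harmonic sum H_n(s_1,...,s_r) as a rational number.
   Indices k_1 < ... < k_r in {1,...,n} are encoded as strictly increasing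
   functions k : 'I_r -> 'I_n, with k_i = (k i).+1. *)
Definition H (n r : nat) (s : 'I_r -> nat) : rat :=
  \sum_(k : {ffun 'I_r -> 'I_n} |
          [forall i : 'I_r, forall j : 'I_r, (i < j)%N ==> (k i < k j)%N])
     \prod_(i < r) (((k i).+1 ^ s i)%:R)^-1.

(* Main.v *)
Require Import Defs.
From HB Require Import structures.
From mathcomp Require Import all_boot all_order all_algebra.
From mathcomp Require Import zify ring.
Import Order.TTheory GRing.Theory Num.Theory.
Local Open Scope ring_scope.

Definition pint (p : nat) (x : rat) :=
  exists b : nat, coprime b p /\ (b%:R * x) \is a Num.int.

Lemma pint_add p x y : pint p x -> pint p y -> pint p (x + y).
Proof.
move=> [b1 [c1 i1]] [b2 [c2 i2]]; exists (b1 * b2)%N; split.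
  by rewrite coprimeMl c1 c2.
have -> : (b1 * b2)%N%:R * (x + y) = b2%:R * (b1%:R * x) + b1%:R * (b2%:R * y).
  by rewrite natrM; ring.
by rewrite rpredD // rpredM // rpred_nat.
Qed.

Lemma pint_mul p x y : pint p x -> pint p y -> pint p (x * y).
Proof.
move=> [b1 [c1 i1]] [b2 [c2 i2]]; exists (b1 * b2)%N; split.
  by rewrite coprimeMl c1 c2.
have -> : (b1 * b2)%N%:R * (x * y) = (b1%:R * x) * (b2%:R * y).
  by rewrite natrM; ring.
by rewrite rpredM.
Qed.

Lemma pint_int p x : x \is a Num.int -> pint p x.
Proof. by move=> h; exists 1%N; rewrite coprime1n mul1r. Qed.

Lemma pint_prod p (I : finType) (P : pred I) (F : I -> rat) :
  (forall i, P i -> pint p (F i)) -> pint p (\prod_(i | P i) F i).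
Proof.
move=> h; apply: (big_ind (pint p)) => //; first exact: pint_int.
exact: pint_mul.
Qed.

Lemma pint_sum p (I : finType) (P : pred I) (F : I -> rat) :
  (forall i, P i -> pint p (F i)) -> pint p (\sum_(i | P i) F i).
Proof.
move=> h; apply: (big_ind (pint p)) => //; first exact: pint_int.
exact: pint_add.
Qed.

Lemma incr_ord (r : nat) (g : 'I_r.+1 -> nat) :
  (forall i j : 'I_r.+1, (i < j)%N -> (g i < g j)%N) ->
  (forall i, 0 < g i <= r.+1)%N -> forall i : 'I_r.+1, g i = i.+1.
Proof.
move=> hinc hb.
pose f m := g (inord m).
have fi : forall m m', (m < m' <= r)%N -> (f m < f m')%N.
  move=> m m' /andP[h1 h2]; apply: hinc; rewrite !inordK //; lia.
have lo : forall m, (m <= r)%N -> (m < f m)%N.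
  elim=> [|m IH] hm; first by have := hb (inord 0); rewrite /f; lia.
  have := IH (ltnW hm); have := fi m m.+1; rewrite hm leqnn => /(_ isT); lia.
have up : forall d m, (m + d <= r)%N -> (f m + d <= f (m + d))%N.
  elim=> [|d IH] m hm; first by rewrite !addn0.
  have := IH m ltac:(lia).
  have := fi (m + d)%N (m + d.+1)%N; rewrite !addnS; lia.
move=> i; have hi := ltn_ord i.
have := lo i; have := up (r - i)%N i; have := hb (inord r).
have ei : inord i = i by apply: val_inj; rewrite /= inordK.
rewrite /f ei; have -> : (i + (r - i))%N = r by lia.
move=> h1 h2 h3; have := h2 (leqnn _); have := h3 ltac:(lia); lia.
Qed.
Lemma pint_opp p x : pint p x -> pint p (- x).
Proof. by move=> [b [c i]]; exists b; split => //; rewrite mulrN rpredN. Qed.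

Lemma pint_pow p (m : nat) : pint p (p%:R ^+ m).
Proof. by apply: pint_int; rewrite -natrX rpred_nat. Qed.

Theorem mainTheorem6 (n r : nat) (hr1 : (1 <= r)%N) (hrn : (r <= n)%N)
  (p : nat) (hp : prime p)
  (hlo : (n%:R / (r.+1)%:R : rat) < p%:R) (hhi : (p%:R : rat) <= n%:R / r%:R)
  (hrp : (r < p)%N)
  (s : 'I_r -> nat) (hs : forall i, (0 < s i)%N) :
  ~ (H n s \is a Num.int).
Proof.
move: s hs hlo hhi hrp hrn hr1; case: r => // r s hs hlo hhi hrp hrn _.
have p0 : (0 < p)%N by exact: prime_gt0.
have hlt : (n < p * r.+2)%N.
  by move: hlo; rewrite ltr_pdivrMr ?ltr0n // -natrM ltr_nat.
have hle : (p * r.+1 <= n)%N.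
  by move: hhi; rewrite ler_pdivlMr ?ltr0n // -natrM ler_nat.
have hpp : (n < p * p)%N by apply: (leq_trans hlt); rewrite leq_mul2l hrp orbT.
pose e (k : {ffun 'I_r.+1 -> 'I_n}) i := if (p %| (k i).+1)%N then s i else 0%N.
pose a k := (\sum_i e k i)%N.
pose S := (\sum_i s i)%N.
pose t (k : {ffun 'I_r.+1 -> 'I_n}) : rat := \prod_(i < r.+1) (((k i).+1 ^ s i)%:R)^-1.
have key : forall k, pint p (p%:R ^+ a k * t k).
  move=> k; rewrite /a -prodrXr /t -big_split /=; apply: pint_prod => i _.
  rewrite /e; have hm : ((k i).+1 <= n)%N := ltn_ord (k i).
  case: ifP => hd.
    set m := (k i).+1 in hm hd *.
    have em : m = (m %/ p * p)%N by rewrite divnK.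
    have j0 : (0 < m %/ p)%N by rewrite divn_gt0 // dvdn_leq.
    have jp : (m %/ p < p)%N by rewrite ltn_divLR //; apply: leq_ltn_trans hm hpp.
    exists ((m %/ p) ^ s i)%N; split.
      by rewrite coprimeXl // coprime_sym prime_coprime // gtnNdvd.
    rewrite {2}em expnMn natrM !natrX.
    have u0 : ((m %/ p)%:R ^+ s i : rat) != 0 by rewrite expf_neq0 // pnatr_eq0 -lt0n.
    have v0 : (p%:R ^+ s i : rat) != 0 by rewrite expf_neq0 // pnatr_eq0 -lt0n.
    have -> : ((m %/ p)%:R ^+ s i * (p%:R ^+ s i * ((m %/ p)%:R ^+ s i * p%:R ^+ s i)^-1) : rat) = 1.
      by field; rewrite u0 v0.
    exact: rpred1.
  exists ((k i).+1 ^ s i)%N; split.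
    by rewrite coprimeXl // coprime_sym prime_coprime // hd.
  by rewrite expr0 mul1r divff ?rpred1 // pnatr_eq0 expn_eq0.
pose P (k : {ffun 'I_r.+1 -> 'I_n}) :=
  [forall i : 'I_r.+1, forall j : 'I_r.+1, (i < j)%N ==> (k i < k j)%N].
have hsp : forall i : 'I_r.+1, ((i.+1 * p).-1 < n)%N.
  move=> i; have := ltn_ord i; have : (i.+1 * p <= p * r.+1)%N.
    by rewrite mulnC leq_mul2l ltn_ord orbT.
  nia.
pose sp : {ffun 'I_r.+1 -> 'I_n} := [ffun i => Ordinal (hsp i)].
have spv : forall i, (sp i).+1 = (i.+1 * p)%N.
  by move=> i; rewrite ffunE /= prednK // muln_gt0.
have Psp : P sp.
  apply/forallP => i; apply/forallP => j; apply/implyP => hij.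
  have := spv i; have := spv j.
  have : (i.+1 * p < j.+1 * p)%N by rewrite ltn_pmul2r.
  lia.
have uniq : forall k, P k -> k != sp -> exists i, ~~ (p %| (k i).+1)%N.
  move=> k Pk kn; apply/existsP; apply: contraNT kn; rewrite negb_exists => /forallP hd.
  have hd' : forall i, (p %| (k i).+1)%N by move=> i; have := hd i; rewrite negbK.
  have hg := @incr_ord r (fun i => (k i).+1 %/ p)%N.
  apply/eqP/ffunP => i; apply: val_inj; rewrite ffunE /=.
  have em : forall i, (k i).+1 = ((k i).+1 %/ p * p)%N by move=> i'; rewrite divnK.
  have h1 : forall i j : 'I_r.+1, (i < j)%N -> ((k i).+1 %/ p < (k j).+1 %/ p)%N.
    move=> i' j' hij; have := forallP (forallP Pk i') j'; rewrite hij /= => hk.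
    rewrite -(ltn_pmul2r p0) -!em; lia.
  have h2 : forall i, (0 < (k i).+1 %/ p <= r.+1)%N.
    move=> i'; rewrite divn_gt0 // dvdn_leq //= -ltnS ltn_divLR //.
    have := ltn_ord (k i'); lia.
  have hgi := hg h1 h2 i; have := em i; rewrite hgi; lia.
have alt : forall k, P k -> k != sp -> (a k < S)%N.
  move=> k Pk kn; have [i0 hi0] := uniq k Pk kn.
  rewrite /a /S (bigD1 i0) //= [X in (_ < X)%N](bigD1 i0) //= /e (negbTE hi0) add0n.
  have := hs i0; have : (\sum_(i < r.+1 | i != i0) (if (p %| (k i).+1)%N then s i else 0) <=
     \sum_(i < r.+1 | i != i0) s i)%N.
    by apply: leq_sum => i _; case: ifP.
  move=> h1 h2; rewrite -add1n; exact: leq_add h2 h1.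
have eH : H n s = t sp + \sum_(k | P k && (k != sp)) t k by rewrite /H (bigD1 sp).
have S0 : (0 < S)%N by rewrite /S big_ord_recl; have := hs ord0; lia.
have others : pint p (p%:R ^+ S.-1 * \sum_(k | P k && (k != sp)) t k).
  rewrite mulr_sumr; apply: pint_sum => k /andP[Pk kn].
  have := alt k Pk kn => hak.
  rewrite -(subnK (_ : a k <= S.-1)%N) ?exprD -?mulrA; last by lia.
  exact: pint_mul (pint_pow _ _) (key k).
move=> Hint.
have : pint p (p%:R ^+ S.-1 * t sp).
  have -> : p%:R ^+ S.-1 * t sp = p%:R ^+ S.-1 * H n s - p%:R ^+ S.-1 * \sum_(k | P k && (k != sp)) t k.
    by rewrite eH mulrDr addrK.
  apply: pint_add; last exact: pint_opp.
  by apply: pint_int; rewrite rpredM // -natrX rpred_nat.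
pose c := (\prod_(i < r.+1) (i.+1 ^ s i))%N.
have tsp : t sp = (c%:R)^-1 * (p%:R ^+ S)^-1.
  rewrite /t prodfV -invfM; congr (_^-1).
  rewrite /c /S natr_prod -prodrXr -big_split /=; apply: eq_bigr => i _.
  by rewrite spv expnMn natrM !natrX.
move=> [b [cb hb]].
have c0 : (c%:R : rat) != 0 by rewrite pnatr_eq0 -lt0n; apply: prodn_gt0 => i; rewrite expn_gt0.
have pS : (p%:R ^+ S : rat) = p%:R ^+ S.-1 * p%:R by rewrite -exprSr prednK.
have p0' : (p%:R : rat) != 0 by rewrite pnatr_eq0 -lt0n.
have pS0 : (p%:R ^+ S.-1 : rat) != 0 by rewrite expf_neq0.
set z := b%:R * (p%:R ^+ S.-1 * t sp) in hb.
have ez : z * (c%:R * p%:R) = b%:R.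
  by rewrite /z tsp pS; field; rewrite c0 p0' pS0.
have zn : z \is a Num.nat.
  rewrite natrEint hb /=; rewrite /z tsp pS.
  by rewrite mulr_ge0 // mulr_ge0 // ?exprn_ge0 // mulr_ge0 // invr_ge0 ?mulr_ge0 ?exprn_ge0.
have [m em] := natrP zn.
move: ez; rewrite em -!natrM => /eqP; rewrite eqr_nat => /eqP eb.
have : (p %| b)%N by rewrite -eb mulnA dvdn_mull.
by move=> hpb; move: cb; rewrite coprime_sym prime_coprime // hpb.
Qed.
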